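(* Consider a human–algorithm system (as defined in the context) with $A\le H$, let $s$ be a weighting function for $c$, and write $s_i=s(a_i,h_i)$ and $C=\sum_{i=1}^N p_i\,c(a_i,h_i)$. Let $\epsilon_a=\max_i a_i-\min_i a_i$ and $\epsilon_h=\max_i h_i-\min_i h_i$ be the loss disparities of the algorithm and of the unaided human. If the system exhibits complementarity, then $$A-C+(H-A)\sum_{i=1}^N p_i\,s_i<\epsilon_a+\epsilon_h.$$
   Context: A human–algorithm system consists of: an integer $N\ge1$ (number of regimes); probabilities $p_1,\dots,p_N\ge 0$ with $\sum_i p_i=1$; algorithmic losses $a_1,\dots,a_N\ge 0$ and unaided-human losses $h_1,\dots,h_N\ge0$; and a combining function $c:[0,\infty)^2\to\mathbb{R}$ satisfying $\min(a,h)\le c(a,h)\le\max(a,h)$ for all $a,h\ge0$, where $c(a_i,h_i)$ is the loss of the combined system in regime $i$. Write $A=\sum_i p_i a_i$ and $H=\sum_i p_i h_i$. The system exhibits complementarity if $\sum_{i=1}^N p_i\,c(a_i,h_i)<\min(A,H)$. A weighting function for $c$ is a function $s:[0,\infty)^2\to[0,1]$ with $c(a,h)=(1-s(a,h))a+s(a,h)h$ for all $a,h\ge0$. *)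

(* Defs.v *)
From mathcomp Require Import all_boot all_order all_algebra.
Set Implicit Arguments. Unset Strict Implicit. Unset Printing Implicit Defensive.
Import Order.TTheory GRing.Theory Num.Theory.
Local Open Scope ring_scope.

(* Regimes are indexed by 'I_N with N >= 1 enforced by writing N = n.+1. *)

Definition maxI (R : realDomainType) (n : nat) (f : 'I_n.+1 -> R) : R :=
  \big[Num.max/f ord0]_(i < n.+1) f i.
Definition minI (R : realDomainType) (n : nat) (f : 'I_n.+1 -> R) : R :=
  \big[Num.min/f ord0]_(i < n.+1) f i.

Definition expect (R : realDomainType) (n : nat) (p x : 'I_n.+1 -> R) : R :=
  \sum_(i < n.+1) p i * x i.

Definition is_system (R : realDomainType) (n : nat) (p a h : 'I_n.+1 -> R)
  (c : R -> R -> R) : Prop :=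
  (forall i, 0 <= p i) /\ \sum_(i < n.+1) p i = 1 /\
  (forall i, 0 <= a i) /\ (forall i, 0 <= h i) /\
  (forall x y, 0 <= x -> 0 <= y -> Num.min x y <= c x y <= Num.max x y).

Definition complementarity (R : realDomainType) (n : nat) (p a h : 'I_n.+1 -> R)
  (c : R -> R -> R) : Prop :=
  \sum_(i < n.+1) p i * c (a i) (h i) < Num.min (expect p a) (expect p h).

Definition weighting (R : realDomainType) (c s : R -> R -> R) : Prop :=
  forall x y, 0 <= x -> 0 <= y ->
    0 <= s x y <= 1 /\ c x y = (1 - s x y) * x + s x y * y.

(* Main.v *)
Require Import Defs.
From mathcomp Require Import all_boot all_order all_algebra.
From mathcomp Require Import ring lra.
Import Order.TTheory GRing.Theory Num.Theory.
Local Open Scope ring_scope.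

Lemma bigmax_ub (R : realDomainType) (I : eqType) (r : seq I) (f : I -> R) x0 i :
  i \in r -> f i <= \big[Num.max/x0]_(j <- r) f j.
Proof.
elim: r => [//|y r IH]; rewrite inE big_cons => /orP [/eqP ->|Hi].
  by rewrite le_max lexx.
by rewrite le_max (IH Hi) orbT.
Qed.

Lemma bigmin_lb (R : realDomainType) (I : eqType) (r : seq I) (f : I -> R) x0 i :
  i \in r -> \big[Num.min/x0]_(j <- r) f j <= f i.
Proof.
elim: r => [//|y r IH]; rewrite inE big_cons => /orP [/eqP ->|Hi].
  by rewrite ge_min lexx.
by rewrite ge_min (IH Hi) orbT.
Qed.

Lemma maxI_ub (R : realDomainType) n (f : 'I_n.+1 -> R) i : f i <= maxI f.
Proof. by rewrite /maxI; apply: bigmax_ub; rewrite mem_index_enum. Qed.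

Lemma minI_lb (R : realDomainType) n (f : 'I_n.+1 -> R) i : minI f <= f i.
Proof. by rewrite /minI; apply: bigmin_lb; rewrite mem_index_enum. Qed.

Lemma pos_sum_ex (R : realDomainType) n (F : 'I_n -> R) :
  0 < \sum_i F i -> exists i, 0 < F i.
Proof.
move=> H; case: (boolP [exists i, 0 < F i]) => [/existsP //|/existsPn K].
have : \sum_i F i <= 0.
  by apply: sumr_le0 => i _; move: (K i); rewrite -leNgt.
by rewrite leNgt H.
Qed.

Lemma sum_ge_one (R : realDomainType) n (F : 'I_n -> R) j :
  (forall i, 0 <= F i) -> F j <= \sum_i F i.
Proof.
move=> H; rewrite (bigD1 j) //= lerDl; apply: sumr_ge0 => i _; exact: H.
Qed.

Theorem lemma9 (R : realFieldType) (n : nat) (p a h : 'I_n.+1 -> R)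
  (c s : R -> R -> R) :
  is_system p a h c ->
  expect p a <= expect p h ->
  weighting c s ->
  complementarity p a h c ->
  let A := expect p a in
  let H := expect p h in
  let C := \sum_(i < n.+1) p i * c (a i) (h i) in
  let eps_a := maxI a - minI a in
  let eps_h := maxI h - minI h in
  A - C + (H - A) * (\sum_(i < n.+1) p i * s (a i) (h i)) < eps_a + eps_h.
Proof.
move=> [hp [hp1 [ha [hh _]]]] hAH hw; rewrite /complementarity.
move=> hcomp; have hCA : \sum_(i < n.+1) p i * c (a i) (h i) < expect p a.
  by move: hcomp; rewrite (min_idPl hAH).
set A := expect p a in hCA *; set H := expect p h in hAH *.
set C := \sum_(i < n.+1) p i * c (a i) (h i) in hCA *.
set eps_a := maxI a - minI a; set eps_h := maxI h - minI h.
have hs i : 0 <= s (a i) (h i) <= 1 by case: (hw _ _ (ha i) (hh i)).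
have hc i : c (a i) (h i) = (1 - s (a i) (h i)) * a i + s (a i) (h i) * h i.
  by case: (hw _ _ (ha i) (hh i)).
set S := \sum_(i < n.+1) p i * s (a i) (h i).
have hCH : C < H by apply: (lt_le_trans hCA).
have eqC : C = \sum_i (p i * a i + p i * s (a i) (h i) * (h i - a i)).
  by apply: eq_bigr => i _; rewrite hc; ring.
have eqL : A - C + (H - A) * S =
   \sum_i p i * s (a i) (h i) * ((H - h i) + (a i - A)).
  rewrite eqC /S /A /expect big_split /= mulr_sumr.
  rewrite opprD addrA subrr add0r -sumrN -big_split /=.
  by apply: eq_bigr => i _; ring.
have hAmin : minI a <= A.
  rewrite /A /expect -[minI a]mul1r -hp1 mulr_suml.
  by apply: ler_sum => i _; apply: ler_wpM2l; [exact: hp|exact: minI_lb].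
have hHmax : H <= maxI h.
  rewrite /H /expect -[maxI h]mul1r -hp1 mulr_suml.
  by apply: ler_sum => i _; apply: ler_wpM2l; [exact: hp|exact: maxI_ub].
have [i Hi] : exists i, 0 < p i * s (a i) (h i) * (a i - h i).
  apply: pos_sum_ex.
  have -> : \sum_i p i * s (a i) (h i) * (a i - h i) = A - C.
    rewrite eqC /A /expect -sumrB; apply: eq_bigr => k _; ring.
  by rewrite subr_gt0.
have [j Hj] : exists j, 0 < p j * (1 - s (a j) (h j)) * (h j - a j).
  apply: pos_sum_ex.
  have -> : \sum_j p j * (1 - s (a j) (h j)) * (h j - a j) = H - C.
    rewrite eqC /H /expect -sumrB; apply: eq_bigr => k _; ring.
  by rewrite subr_gt0.
have hpi := hp i; have hpj := hp j; have hsi := hs i; have hsj := hs j.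
have hai : h i < a i.
  move/andP: hsi => [hsi0 hsi1].
  rewrite -subr_gt0 ltNge; apply/negP => K; move: Hi; apply/negP.
  by rewrite -leNgt; apply: mulr_ge0_le0 => //; exact: mulr_ge0.
have pos1 : 0 < p j * (1 - s (a j) (h j)).
  move/andP: hsj => [hsj0 hsj1].
  rewrite lt_def mulr_ge0 ?subr_ge0 // andbT; apply/eqP => K.
  by move: Hj; rewrite K mul0r ltxx.
have haj : a j < h j.
  by rewrite -subr_gt0; move: Hj; rewrite pmulr_rgt0.
have hS1 : S < 1.
  rewrite -subr_gt0 -{1}hp1 /S -sumrB; apply: (lt_le_trans pos1).
  have -> : \sum_k (p k - p k * s (a k) (h k)) = \sum_k p k * (1 - s (a k) (h k)).
    by apply: eq_bigr => k _; ring.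
  apply: sum_ge_one => k; move/andP: (hs k) => [? ?].
  by rewrite mulr_ge0 ?subr_ge0.
have heps : 0 < eps_a + eps_h.
  have := @maxI_ub _ _ a i; have := @minI_lb _ _ a j; have := @maxI_ub _ _ h j;
  have := @minI_lb _ _ h i; rewrite /eps_a /eps_h; lra.
have hS0 : 0 <= S by apply: sumr_ge0 => k _; move/andP: (hs k) => [? ?]; rewrite mulr_ge0.
rewrite eqL; apply: (le_lt_trans (y := S * (eps_a + eps_h))); last first.
  by rewrite gtr_pMl.
rewrite /S mulr_suml; apply: ler_sum => k _; apply: ler_wpM2l.
  by move/andP: (hs k) => [? ?]; rewrite mulr_ge0.
have := @maxI_ub _ _ a k; have := @minI_lb _ _ h k; rewrite /eps_a /eps_h; lra.
Qed.
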